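(* Let $E\subset\mathbb T$ be an infinite set and $K_1\subset\mathbb T$ a compact set with $\overline{E}\cap K_1=\emptyset$. Let $$\mathcal R=\Big\{c_0+i\sum_{k=1}^n c_k\frac{e^{i\psi_k}+z}{e^{i\psi_k}-z}\ :\ n\in\mathbb N,\ c_0,c_1,\dots,c_n\in\mathbb R,\ e^{i\psi_k}\in E\ (1\le k\le n)\Big\}.$$ Then each element of $\mathcal R$ is real-valued on $K_1$, and the set of restrictions $\{r_{|_{K_1}}: r\in\mathcal R\}$ is uniformly dense in $C_{\mathbb R}(K_1)$, the space of real-valued continuous functions on $K_1$.
   Context: $\mathbb T$ is the unit circle in $\mathbb C$; $z$ denotes the complex variable. *)

(* Defs.v *)
From Stdlib Require Import Reals Lra Lia List.
Open Scope R_scope.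

Definition Cx : Type := (R * R)%type.
Definition Re (z : Cx) : R := fst z.
Definition Im (z : Cx) : R := snd z.
Definition RtoC (x : R) : Cx := (x, 0).
Definition Ci : Cx := (0, 1).
Definition Cplus (z w : Cx) : Cx := (Re z + Re w, Im z + Im w).
Definition Cminus (z w : Cx) : Cx := (Re z - Re w, Im z - Im w).
Definition Cmult (z w : Cx) : Cx :=
  (Re z * Re w - Im z * Im w, Re z * Im w + Im z * Re w).
Definition Cinv (z : Cx) : Cx :=
  (Re z / (Re z ^ 2 + Im z ^ 2), - Im z / (Re z ^ 2 + Im z ^ 2)).
Definition Cdiv (z w : Cx) : Cx := Cmult z (Cinv w).
Definition Cmod (z : Cx) : R := sqrt (Re z ^ 2 + Im z ^ 2).
Definition Cdist (z w : Cx) : R := Cmod (Cminus z w).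

Definition unit_circle (z : Cx) : Prop := Re z ^ 2 + Im z ^ 2 = 1.

Definition closureC (A : Cx -> Prop) (z : Cx) : Prop :=
  forall eps, 0 < eps -> exists w, A w /\ Cdist z w < eps.
Definition openC (U : Cx -> Prop) : Prop :=
  forall z, U z -> exists eps, 0 < eps /\ forall w, Cdist z w < eps -> U w.
Definition compactC (K : Cx -> Prop) : Prop :=
  forall (I : Type) (U : I -> Cx -> Prop),
    (forall i, openC (U i)) ->
    (forall z, K z -> exists i, U i z) ->
    exists l : list I, forall z, K z -> exists i, In i l /\ U i z.
Definition infinite_set (A : Cx -> Prop) : Prop :=
  ~ exists l : list Cx, forall z, A z -> In z l.

Definition continuous_onC (K : Cx -> Prop) (f : Cx -> R) : Prop :=
  forall z, K z -> forall eps, 0 < eps -> exists delta, 0 < delta /\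
    forall w, K w -> Cdist z w < delta -> Rabs (f z - f w) < eps.

Fixpoint herg_sum (n : nat) (c : nat -> R) (w : nat -> Cx) (z : Cx) : Cx :=
  match n with
  | O => (0, 0)
  | S m => Cplus (herg_sum m c w z)
      (Cmult (RtoC (c n)) (Cdiv (Cplus (w n) z) (Cminus (w n) z)))
  end.

(* r(z) = c_0 + i * sum_{k=1}^n c_k (w_k + z)/(w_k - z), w_k = e^{i psi_k} *)
Definition rfun (n : nat) (c0 : R) (c : nat -> R) (w : nat -> Cx) (z : Cx) : Cx :=
  Cplus (RtoC c0) (Cmult Ci (herg_sum n c w z)).

(* Main.v *)
Require Import Defs.
From Stdlib Require Import Reals Lra Lia List Classical ClassicalEpsilon.
Open Scope R_scope.

Definition nrm2 (w z : Cx) : R := (fst w - fst z)^2 + (snd w - snd z)^2.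

Lemma Cdist_eq z w : Cdist z w = sqrt (nrm2 z w).
Proof. reflexivity. Qed.

Lemma nrm2_nonneg z w : 0 <= nrm2 z w.
Proof. unfold nrm2; pose proof (pow2_ge_0 (fst w - fst z)); pose proof (pow2_ge_0 (snd w - snd z)); lra. Qed.

Lemma Cdist_nonneg z w : 0 <= Cdist z w.
Proof. rewrite Cdist_eq; apply sqrt_pos. Qed.

Lemma Cdist_sq z w : Cdist z w ^ 2 = nrm2 z w.
Proof. rewrite Cdist_eq. simpl. rewrite Rmult_1_r. apply sqrt_sqrt, nrm2_nonneg. Qed.

Lemma Cdist_sym z w : Cdist z w = Cdist w z.
Proof. rewrite !Cdist_eq; unfold nrm2; f_equal; ring. Qed.

Lemma Cdist_refl z : Cdist z z = 0.
Proof. rewrite Cdist_eq; unfold nrm2. replace ((fst z - fst z) ^ 2 + (snd z - snd z) ^ 2) with 0 by ring. apply sqrt_0. Qed.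

Lemma Cdist_lt z w r : 0 < r -> nrm2 z w < r^2 -> Cdist z w < r.
Proof.
  intros Hr H. pose proof (Cdist_sq z w). pose proof (Cdist_nonneg z w). nra.
Qed.

Lemma Cdist_lt_inv z w r : Cdist z w < r -> nrm2 z w < r^2.
Proof.
  intros H. pose proof (Cdist_sq z w). pose proof (Cdist_nonneg z w). nra.
Qed.

Lemma Cdist_le_sq z w r : 0 <= r -> nrm2 z w <= r^2 -> Cdist z w <= r.
Proof.
  intros Hr H. pose proof (Cdist_sq z w). pose proof (Cdist_nonneg z w). nra.
Qed.

Lemma nrm2_neq z w : z <> w -> nrm2 z w <> 0.
Proof.
  intros H H0. apply H. destruct z as [z1 z2], w as [w1 w2]. unfold nrm2 in H0; simpl in H0.
  pose proof (pow2_ge_0 (z1-w1)); pose proof (pow2_ge_0 (z2-w2)).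
  assert (A1: (z1-w1)^2 = 0) by lra. assert (A2: (z2-w2)^2 = 0) by lra.
  destruct (Req_dec (z1-w1) 0) as [B1|B1]; [|destruct (pow_nonzero _ 2 B1 A1)].
  destruct (Req_dec (z2-w2) 0) as [B2|B2]; [|destruct (pow_nonzero _ 2 B2 A2)].
  assert (z1 = w1) by lra. assert (z2 = w2) by lra. subst; reflexivity.
Qed.

Lemma Cdist_pos z w : z <> w -> 0 < Cdist z w.
Proof.
  intros H. pose proof (nrm2_neq z w H). pose proof (nrm2_nonneg z w).
  pose proof (Cdist_sq z w). pose proof (Cdist_nonneg z w).
  destruct (Req_dec (Cdist z w) 0) as [e|e]; [|lra]. rewrite e in *. simpl in *. lra.
Qed.

Lemma Cdist_tri x y z : Cdist x z <= Cdist x y + Cdist y z.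
Proof.
  pose proof (Cdist_sq x y) as A. pose proof (Cdist_sq y z) as B. pose proof (Cdist_sq x z) as C.
  pose proof (Cdist_nonneg x y). pose proof (Cdist_nonneg y z). pose proof (Cdist_nonneg x z).
  set (p := Cdist x y) in *. set (q := Cdist y z) in *. set (r := Cdist x z) in *.
  unfold nrm2 in *.
  set (p1 := fst x - fst y) in *. set (p2 := snd x - snd y) in *.
  set (q1 := fst y - fst z) in *. set (q2 := snd y - snd z) in *.
  assert (E1 : fst x - fst z = p1 + q1) by (unfold p1, q1; ring).
  assert (E2 : snd x - snd z = p2 + q2) by (unfold p2, q2; ring).
  rewrite E1, E2 in C.
  assert (CS : p1*q1 + p2*q2 <= p * q).
  { assert ((p1*q1+p2*q2)^2 <= (p*q)^2).
    { replace ((p*q)^2) with (p^2*q^2) by ring. rewrite A, B. pose proof (pow2_ge_0 (p1*q2 - p2*q1)). assert (LL: (p1 ^ 2 + p2 ^ 2) * (q1 ^ 2 + q2 ^ 2) - (p1*q1+p2*q2)^2 = (p1*q2 - p2*q1)^2) by ring. lra. }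
    assert (0 <= p*q) by (apply Rmult_le_pos; auto). destruct (Rle_dec (p1*q1+p2*q2) (p*q)) as [ok|nok]; [exact ok|exfalso]. apply Rnot_le_lt in nok. nra. }
  nra.
Qed.

Lemma ball_open z r : openC (fun t => Cdist z t < r).
Proof.
  intros t Ht. exists (r - Cdist z t). split; [lra|].
  intros w Hw. pose proof (Cdist_tri z t w). lra.
Qed.

Lemma cover_lemma (K : Cx -> Prop) (r : Cx -> R) :
  compactC K -> (forall z, K z -> 0 < r z) ->
  exists l : list Cx, forall t, K t -> exists z, In z l /\ K z /\ Cdist z t < r z.
Proof.
  intros HK Hr.
  destruct (HK Cx (fun z t => K z /\ Cdist z t < r z)) as [l Hl].
  - intros z t [Kz Ht]. destruct (ball_open z (r z) t Ht) as [e [He H]].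
    exists e; split; auto.
  - intros z Kz. exists z. split; auto. rewrite Cdist_refl. auto.
  - exists l. intros t Kt. destruct (Hl t Kt) as [i [Hi [Ki Hc]]]. eauto.
Qed.

Fixpoint lmin (g : Cx -> R) (l : list Cx) : R :=
  match l with nil => 1 | cons z l' => Rmin (g z) (lmin g l') end.

Lemma lmin_le g l z : In z l -> lmin g l <= g z.
Proof.
  induction l as [|y l IH]; simpl; [tauto|]. intros [<-|H].
  - apply Rmin_l.
  - pose proof (IH H). pose proof (Rmin_r (g y) (lmin g l)). lra.
Qed.

Lemma lmin_pos g l : (forall z, In z l -> 0 < g z) -> 0 < lmin g l.
Proof.
  induction l as [|y l IH]; simpl; intros H; [lra|].
  apply Rmin_glb_lt; auto.
Qed.

Fixpoint lsum (g : Cx -> R) (l : list Cx) : R :=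
  match l with nil => 0 | cons z l' => g z + lsum g l' end.

Lemma lsum_ge g l z : (forall y, 0 <= g y) -> In z l -> g z <= lsum g l.
Proof.
  intros Hg. induction l as [|y l IH]; simpl; [tauto|].
  assert (0 <= lsum g l). { clear IH. induction l; simpl; auto. lra. pose proof (Hg a). lra. }
  intros [<-|HH]. lra. pose proof (IH HH). pose proof (Hg y). lra.
Qed.

Lemma unif_cont (K : Cx -> Prop) (f : Cx -> R) :
  compactC K -> continuous_onC K f ->
  forall eps, 0 < eps -> exists delta, 0 < delta /\
    forall z t, K z -> K t -> Cdist z t < delta -> Rabs (f z - f t) < eps.
Proof.
  intros HK Hf eps Heps.
  assert (Hex : forall z, exists d, 0 < d /\ (K z -> forall t, K t -> Cdist z t < d -> Rabs (f z - f t) < eps/2)).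
  { intros z. destruct (Classical_Prop.classic (K z)) as [Kz|Kz].
    - destruct (Hf z Kz (eps/2)) as [d [Hd H]]; [lra|]. exists d; auto.
    - exists 1. split; [lra|tauto]. }
  set (r := fun z => proj1_sig (constructive_indefinite_description _ (Hex z)) / 2).
  assert (Hr : forall z, 0 < r z /\ (K z -> forall t, K t -> Cdist z t < 2 * r z -> Rabs (f z - f t) < eps/2)).
  { intros z. unfold r. destruct (constructive_indefinite_description _ (Hex z)) as [d Hd]. simpl.
    replace (2 * (d/2)) with d by field. split; [lra|tauto]. }
  destruct (cover_lemma K r HK) as [l Hl].
  { intros z Kz. destruct (Hr z). lra. }
  exists (lmin r l). split.
  { apply lmin_pos. intros z _. apply Hr. }
  intros z t Kz Kt Hzt.
  destruct (Hl z Kz) as [y [Hy [Ky Hyz]]].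
  pose proof (lmin_le r l y Hy) as Hm.
  destruct (Hr y) as [Hpos Hc].
  pose proof (Hc Ky z Kz ltac:(lra)) as H1.
  pose proof (Cdist_tri y z t).
  pose proof (Hc Ky t Kt ltac:(lra)) as H2.
  replace (f z - f t) with (-(f y - f z) + (f y - f t)) by ring.
  pose proof (Rabs_triang (-(f y - f z)) (f y - f t)). rewrite Rabs_Ropp in *. lra.
Qed.

Lemma bounded_cont (K : Cx -> Prop) (f : Cx -> R) :
  compactC K -> continuous_onC K f ->
  exists M, 0 < M /\ forall z, K z -> Rabs (f z) <= M.
Proof.
  intros HK Hf.
  assert (Hex : forall z, exists d, 0 < d /\ (K z -> forall t, K t -> Cdist z t < d -> Rabs (f z - f t) < 1)).
  { intros z. destruct (Classical_Prop.classic (K z)) as [Kz|Kz].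
    - destruct (Hf z Kz 1) as [d [Hd H]]; [lra|]. exists d; auto.
    - exists 1. split; [lra|tauto]. }
  set (r := fun z => proj1_sig (constructive_indefinite_description _ (Hex z))).
  assert (Hr : forall z, 0 < r z /\ (K z -> forall t, K t -> Cdist z t < r z -> Rabs (f z - f t) < 1)).
  { intros z. unfold r. destruct (constructive_indefinite_description _ (Hex z)) as [d Hd]. simpl. auto. }
  destruct (cover_lemma K r HK) as [l Hl].
  { intros z Kz. apply Hr. }
  exists (1 + lsum (fun z => Rabs (f z)) l). split.
  { assert (0 <= lsum (fun z => Rabs (f z)) l). { clear Hl. induction l; simpl. lra. pose proof (Rabs_pos (f a)). lra. } lra. }
  intros t Kt. destruct (Hl t Kt) as [y [Hy [Ky Hyt]]].
  pose proof (proj2 (Hr y) Ky t Kt Hyt).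
  pose proof (lsum_ge (fun z => Rabs (f z)) l y (fun y => Rabs_pos _) Hy). simpl in *.
  replace (f t) with (f y - (f y - f t)) by ring.
  pose proof (Rabs_triang (f y) (- (f y - f t))). rewrite Rabs_Ropp in *. unfold Rminus at 1. lra.
Qed.

Lemma dist_pos_compact (K : Cx -> Prop) (a : Cx) :
  compactC K -> (forall z, K z -> z <> a) ->
  exists d, 0 < d /\ forall z, K z -> d <= Cdist a z.
Proof.
  intros HK Ha.
  destruct (cover_lemma K (fun z => Cdist a z / 2) HK) as [l Hl].
  { intros z Kz. pose proof (Cdist_pos a z (fun e => Ha z Kz (eq_sym e))). lra. }
  set (g := fun z => if Rlt_dec 0 (Cdist a z) then Cdist a z / 2 else 1).
  exists (lmin g l). split.
  { apply lmin_pos. intros z _. unfold g. destruct (Rlt_dec 0 (Cdist a z)); lra. }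
  intros t Kt. destruct (Hl t Kt) as [y [Hy [Ky Hyt]]].
  pose proof (lmin_le g l y Hy). pose proof (Cdist_pos a y (fun e => Ha y Ky (eq_sym e))).
  unfold g in H; cbv beta in H. destruct (Rlt_dec 0 (Cdist a y)); [|lra].
  pose proof (Cdist_tri a t y) as Ht. rewrite (Cdist_sym t y) in Ht. fold g in H. lra.
Qed.


Definition G (w z : Cx) : R := Re (Cmult Ci (Cdiv (Cplus w z) (Cminus w z))).

Lemma G_formula w z : nrm2 w z <> 0 ->
  G w z = 2 * (snd w * fst z - fst w * snd z) / nrm2 w z.
Proof.
  intros H. unfold G, nrm2 in *. destruct w as [w1 w2], z as [z1 z2].
  unfold Cmult, Cdiv, Cinv, Cplus, Cminus, Ci, Re, Im; simpl in *.
  field; intro HH; apply H; rewrite <- HH; ring.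
Qed.

Lemma ImG w z : nrm2 w z <> 0 -> unit_circle w -> unit_circle z ->
  Im (Cmult Ci (Cdiv (Cplus w z) (Cminus w z))) = 0.
Proof.
  intros H Hw Hz. unfold nrm2, unit_circle in *. destruct w as [w1 w2], z as [z1 z2].
  unfold Cmult, Cdiv, Cinv, Cplus, Cminus, Ci, Re, Im in *; simpl in *.
  assert (Hd : (w1 - z1) * (w1 - z1) + (w2 - z2) * (w2 - z2) <> 0) by (intro HH; apply H; rewrite <- HH; ring).
  unfold Rdiv. generalize (/ ((w1 - z1) * ((w1 - z1) * 1) + (w2 - z2) * ((w2 - z2) * 1))); intro I.
  assert (Z: (w1+z1)*(w1-z1)+(w2+z2)*(w2-z2) = 0) by nra.
  transitivity (((w1+z1)*(w1-z1)+(w2+z2)*(w2-z2)) * I); [ring | rewrite Z; ring].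
Qed.

Lemma key_C (a w z : Cx) : nrm2 a z <> 0 -> nrm2 a w <> 0 -> nrm2 w z <> 0 ->
  let U := fun t => Cmult Ci (Cdiv (Cplus a t) (Cminus a t)) in
  Cmult (Cmult Ci (Cdiv (Cplus w z) (Cminus w z))) (Cminus (U w) (U z))
  = Cplus (Cmult (U z) (U w)) (RtoC 1).
Proof.
  intros H1 H2 H3 U. unfold U, nrm2 in *. destruct a as [a1 a2], w as [w1 w2], z as [z1 z2].
  unfold Cmult, Cdiv, Cinv, Cplus, Cminus, Ci, Re, Im, RtoC in *; simpl in *.
  f_equal; (field; repeat split; intro HH; [apply H2|apply H1|apply H3]; rewrite <- HH; ring).
Qed.

Lemma key_C2 (a z : Cx) : nrm2 a z <> 0 ->
  Cmult (Cmult Ci (Cdiv (Cplus a z) (Cminus a z))) (Cminus a z) = Cmult Ci (Cplus a z).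
Proof.
  intros H1. unfold nrm2 in *. destruct a as [a1 a2], z as [z1 z2].
  unfold Cmult, Cdiv, Cinv, Cplus, Cminus, Ci, Re, Im, RtoC in *; simpl in *.
  f_equal; (field; intro HH; apply H1; rewrite <- HH; ring).
Qed.

Lemma nrm2_sym a z : nrm2 a z = nrm2 z a.
Proof. unfold nrm2; ring. Qed.

Lemma key_R (a w z : Cx) : unit_circle a -> unit_circle w -> unit_circle z ->
  a <> z -> a <> w -> w <> z ->
  G w z * (G a w - G a z) = G a z * G a w + 1.
Proof.
  intros Ca Cw Cz H1 H2 H3.
  pose proof (key_C a w z (nrm2_neq _ _ H1) (nrm2_neq _ _ H2) (nrm2_neq _ _ H3)) as K.
  simpl in K. apply (f_equal Re) in K.
  pose proof (ImG w z (nrm2_neq _ _ H3) Cw Cz) as I1.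
  pose proof (ImG a z (nrm2_neq _ _ H1) Ca Cz) as I2.
  pose proof (ImG a w (nrm2_neq _ _ H2) Ca Cw) as I3.
  unfold G. revert K I1 I2 I3.
  generalize (Cmult Ci (Cdiv (Cplus w z) (Cminus w z))) as X.
  generalize (Cmult Ci (Cdiv (Cplus a z) (Cminus a z))) as Y.
  generalize (Cmult Ci (Cdiv (Cplus a w) (Cminus a w))) as Z.
  intros [z1 z2] [y1 y2] [x1 x2]. unfold Cmult, Cminus, Cplus, RtoC, Re, Im; simpl.
  intros K -> -> ->. ring_simplify in K. ring_simplify. lra.
Qed.

Lemma cayley_eqs (a z : Cx) : unit_circle a -> unit_circle z -> a <> z ->
  G a z * (fst a - fst z) = - (snd a + snd z) /\ G a z * (snd a - snd z) = fst a + fst z.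
Proof.
  intros Ca Cz H.
  pose proof (key_C2 a z (nrm2_neq _ _ H)) as K.
  pose proof (ImG a z (nrm2_neq _ _ H) Ca Cz) as I.
  unfold G. revert K I.
  generalize (Cmult Ci (Cdiv (Cplus a z) (Cminus a z))) as Y.
  intros [y1 y2]. destruct a as [a1 a2], z as [z1 z2].
  unfold Cmult, Cminus, Cplus, Ci, Re, Im; simpl. intros K ->.
  injection K. intros K2 K1. split; lra.
Qed.


Definition infR (P : R -> Prop) : Prop := ~ exists l : list R, forall x, P x -> In x l.

Lemma infR_mono (P Q : R -> Prop) : (forall x, P x -> Q x) -> infR P -> infR Q.
Proof. intros H HP [l Hl]. apply HP. exists l. auto. Qed.

Lemma infR_diff (P Q : R -> Prop) : infR P -> (exists l, forall x, Q x -> In x l) ->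
  infR (fun x => P x /\ ~ Q x).
Proof.
  intros HP [l2 H2] [l1 H1]. apply HP. exists (l1 ++ l2). intros x Px.
  apply in_or_app. destruct (classic (Q x)); auto.
Qed.

Lemma infR_witness (P : R -> Prop) (x0 : R) : infR P -> exists x, P x /\ x <> x0.
Proof.
  intros HP. apply NNPP. intros Hn. apply HP. exists (x0 :: nil). intros x Px.
  destruct (Req_dec x x0) as [e|e]. left; auto. exfalso. apply Hn. eauto.
Qed.

Lemma acc_point (X : R -> Prop) : (forall x, X x -> -1 <= x <= 1) -> infR X ->
  exists x0, -1 <= x0 <= 1 /\ forall rho, 0 < rho -> exists x, X x /\ x <> x0 /\ Rabs (x - x0) < rho.
Proof.
  intros HX Hinf.
  set (S := fun t => infR (fun x => X x /\ t <= x)).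
  assert (Sb : forall t, S t -> t <= 1).
  { intros t St. destruct (Rle_dec t 1) as [h|h]; auto. exfalso. apply St. exists nil.
    intros x [Xx Hx]. apply HX in Xx. lra. }
  assert (Sm1 : S (-1)).
  { unfold S. apply (infR_mono X); auto. intros x Xx. split; auto. apply HX in Xx. lra. }
  destruct (completeness S) as [x0 [Hub Hlub]].
  { exists 1. intros t St. auto. }
  { exists (-1). exact Sm1. }
  exists x0. split.
  { split. apply Hub; auto. apply Hlub. intros t St; auto. }
  intros rho Hrho.
  assert (Ht : exists t, S t /\ x0 - rho < t).
  { apply NNPP. intros Hn. assert (x0 <= x0 - rho); [|lra]. apply Hlub.
    intros t St. destruct (Rle_dec t (x0 - rho)) as [h|h]; auto. exfalso. apply Hn.
    exists t. split; auto. lra. }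
  destruct Ht as [t [St Ht]].
  assert (Hnot : ~ S (x0 + rho/2)).
  { intros H. pose proof (Hub _ H). lra. }
  unfold S in Hnot. unfold infR in Hnot. apply NNPP in Hnot.
  pose proof (infR_diff _ _ St Hnot) as Hd.
  destruct (infR_witness _ x0 Hd) as [x [[[Xx Hx1] Hx2] Hx3]].
  exists x. split; auto. split; auto.
  assert (x < x0 + rho/2). { destruct (Rlt_dec x (x0 + rho/2)); auto. exfalso. apply Hx2. split; auto. lra. }
  apply Rabs_def1; lra.
Qed.


Lemma circ_snd (w : Cx) (s : R) : unit_circle w -> s * s = 1 -> 0 <= s * snd w ->
  snd w = s * sqrt (1 - fst w ^ 2).
Proof.
  intros Hw Hs Hp. unfold unit_circle, Re, Im in Hw.
  replace (1 - fst w ^ 2) with (snd w ^ 2) by lra.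
  replace (snd w ^ 2) with (Rsqr (snd w)) by (unfold Rsqr; ring). rewrite sqrt_Rsqr_abs.
  assert (s = 1 \/ s = -1) by (destruct (Rle_dec 0 s); nra).
  destruct H as [->| ->].
  - rewrite Rabs_right; lra.
  - rewrite Rabs_left1; lra.
Qed.

Lemma sqrt_diff_sq p q : 0 <= p -> 0 <= q -> (sqrt p - sqrt q)^2 <= Rabs (p - q).
Proof.
  intros Hp Hq. pose proof (sqrt_pos p). pose proof (sqrt_pos q).
  pose proof (sqrt_sqrt p Hp). pose proof (sqrt_sqrt q Hq).
  set (a := sqrt p) in *. set (b := sqrt q) in *.
  replace (p - q) with ((a - b) * (a + b)) by (rewrite <- H1, <- H2; ring).
  rewrite Rabs_mult. rewrite (Rabs_right (a+b)) by lra.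
  destruct (Rle_dec a b).
  - rewrite Rabs_left1 by lra. nra.
  - rewrite Rabs_right by lra. nra.
Qed.

Lemma half_acc (E : Cx -> Prop) (s : R) : s * s = 1 ->
  (forall z, E z -> unit_circle z) ->
  infinite_set (fun w => E w /\ 0 <= s * snd w) ->
  exists a, unit_circle a /\ forall rho, 0 < rho -> exists w, E w /\ w <> a /\ Cdist a w < rho.
Proof.
  intros Hs hE Hinf.
  set (X := fun x => exists w, (E w /\ 0 <= s * snd w) /\ fst w = x).
  assert (HX : forall x, X x -> -1 <= x <= 1).
  { intros x [w [[Ew _] <-]]. apply hE in Ew. unfold unit_circle, Re, Im in Ew.
    pose proof (pow2_ge_0 (snd w)). split; nra. }
  assert (Hi : infR X).
  { intros [l Hl]. apply Hinf. exists (map (fun x => (x, s * sqrt (1 - x^2))) l).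
    intros w [Ew Hw]. assert (Xw : X (fst w)) by (exists w; auto).
    apply Hl in Xw. apply in_map_iff. exists (fst w). split; auto.
    rewrite <- circ_snd; auto. destruct w; reflexivity. }
  destruct (acc_point X HX Hi) as [x0 [Hx0 Hacc]].
  exists (x0, s * sqrt (1 - x0^2)). split.
  { unfold unit_circle, Re, Im; simpl.
    replace ((s * sqrt (1 - x0 * (x0 * 1))) * ((s * sqrt (1 - x0 * (x0 * 1))) * 1))
      with ((s*s) * (sqrt (1 - x0 * (x0 * 1)) * sqrt (1 - x0 * (x0 * 1)))) by ring.
    rewrite sqrt_sqrt by nra. rewrite Hs. ring. }
  intros rho Hrho.
  set (eta := Rmin 1 (rho^2/3)).
  assert (Heta : 0 < eta) by (apply Rmin_glb_lt; nra).
  destruct (Hacc eta Heta) as [x [[w [[Ew Hsw] Hwx]] [Hne Hxx]]].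
  exists w. split; auto. split.
  { intros e. subst w. simpl in Hwx. auto. }
  apply Cdist_lt; auto.
  pose proof (hE w Ew) as Cw. pose proof (circ_snd w s Cw Hs Hsw) as Hw2.
  unfold nrm2. cbn [fst snd]. rewrite Hw2, Hwx.
  replace ((x0 - x) ^ 2 + (s * sqrt (1 - x0 ^ 2) - s * sqrt (1 - x ^ 2)) ^ 2)
    with ((x0 - x) ^ 2 + (s*s) * (sqrt (1 - x0 ^ 2) - sqrt (1 - x ^ 2)) ^ 2) by ring.
  rewrite Hs. rewrite Rmult_1_l.
  assert (Hx : -1 <= x <= 1) by (apply HX; exists w; auto).
  pose proof (sqrt_diff_sq (1 - x0^2) (1 - x^2) ltac:(nra) ltac:(nra)) as Hd.
  replace (1 - x0 ^ 2 - (1 - x ^ 2)) with ((x - x0) * (x + x0)) in Hd by ring.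
  rewrite Rabs_mult in Hd.
  assert (Rabs (x + x0) <= 2) by (apply Rabs_le; lra).
  assert (eta <= 1) by apply Rmin_l. assert (eta <= rho^2/3) by apply Rmin_r.
  pose proof (Rabs_pos (x - x0)).
  assert ((x0 - x)^2 = Rabs (x - x0) ^2) by (rewrite pow2_abs; ring).
  nra.
Qed.

Lemma exists_acc (E : Cx -> Prop) : (forall z, E z -> unit_circle z) -> infinite_set E ->
  exists a, unit_circle a /\ forall rho, 0 < rho -> exists w, E w /\ w <> a /\ Cdist a w < rho.
Proof.
  intros hE Hinf.
  destruct (classic (infinite_set (fun w => E w /\ 0 <= 1 * snd w))) as [H1|H1].
  { apply (half_acc E 1); auto; lra. }
  destruct (classic (infinite_set (fun w => E w /\ 0 <= -1 * snd w))) as [H2|H2].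
  { apply (half_acc E (-1)); auto; lra. }
  exfalso. unfold infinite_set in *. apply NNPP in H1, H2.
  destruct H1 as [l1 H1], H2 as [l2 H2]. apply Hinf. exists (l1 ++ l2).
  intros z Ez. apply in_or_app. destruct (Rle_dec 0 (snd z)).
  left; apply H1; split; auto; lra. right; apply H2; split; auto; lra.
Qed.


Lemma G_bound (a z : Cx) : unit_circle a -> unit_circle z -> a <> z ->
  Rabs (G a z) <= 2 / nrm2 a z.
Proof.
  intros Ca Cz H. pose proof (nrm2_neq _ _ H) as Hn. pose proof (nrm2_nonneg a z).
  rewrite G_formula by auto. unfold Rdiv. rewrite Rabs_mult.
  rewrite (Rabs_right (/ nrm2 a z)) by (apply Rle_ge, Rlt_le, Rinv_0_lt_compat; lra).
  apply Rmult_le_compat_r. left; apply Rinv_0_lt_compat; lra.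
  unfold unit_circle, Re, Im in *. rewrite Rabs_mult, Rabs_right by lra.
  set (q := snd a * fst z - fst a * snd z).
  assert (q^2 <= 1).
  { assert (LL : (fst a ^ 2 + snd a ^ 2) * (fst z ^ 2 + snd z ^ 2) - q^2 = (fst a * fst z + snd a * snd z)^2) by (unfold q; ring).
    rewrite Ca, Cz in LL. pose proof (pow2_ge_0 (fst a * fst z + snd a * snd z)). lra. }
  assert (Rabs q <= 1). { rewrite <- pow2_abs in H1. pose proof (Rabs_pos q). nra. }
  lra.
Qed.

Lemma inv_lip (a z t : Cx) : unit_circle a -> unit_circle z -> unit_circle t -> a <> z -> a <> t ->
  nrm2 z t <= 4 * (G a z - G a t)^2.
Proof.
  intros Ca Cz Ct Hz Ht.
  destruct (cayley_eqs a z Ca Cz Hz) as [E1 E2].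
  destruct (cayley_eqs a t Ca Ct Ht) as [F1 F2].
  set (u := G a z) in *. set (v := G a t) in *.
  clearbody u v. unfold unit_circle, Re, Im in Ca.
  destruct a as [a1 a2], z as [z1 z2], t as [t1 t2]. cbn [fst snd] in *. unfold nrm2; cbn [fst snd].
  assert (Pu : 0 < u^2 + 1) by (pose proof (pow2_ge_0 u); lra).
  assert (Pv : 0 < v^2 + 1) by (pose proof (pow2_ge_0 v); lra).
  assert (Z1 : z1 = (a1*(u^2-1) + 2*u*a2)/(u^2+1)).
  { apply (Rmult_eq_reg_r (u^2+1)); [|lra]. unfold Rdiv. rewrite Rmult_assoc, Rinv_l by lra.
    assert (z1*(u^2+1) - (a1*(u^2-1) + 2*u*a2) = -u*(u*(a1-z1)+(a2+z2)) - (u*(a2-z2)-(a1+z1))) by ring.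
    rewrite E1, E2 in H. lra. }
  assert (Z2 : z2 = (a2*(u^2-1) - 2*u*a1)/(u^2+1)).
  { apply (Rmult_eq_reg_r (u^2+1)); [|lra]. unfold Rdiv. rewrite Rmult_assoc, Rinv_l by lra.
    assert (z2*(u^2+1) - (a2*(u^2-1) - 2*u*a1) = (u*(a1-z1)+(a2+z2)) - u*(u*(a2-z2)-(a1+z1))) by ring.
    rewrite E1, E2 in H. lra. }
  assert (T1 : t1 = (a1*(v^2-1) + 2*v*a2)/(v^2+1)).
  { apply (Rmult_eq_reg_r (v^2+1)); [|lra]. unfold Rdiv. rewrite Rmult_assoc, Rinv_l by lra.
    assert (t1*(v^2+1) - (a1*(v^2-1) + 2*v*a2) = -v*(v*(a1-t1)+(a2+t2)) - (v*(a2-t2)-(a1+t1))) by ring.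
    rewrite F1, F2 in H. lra. }
  assert (T2 : t2 = (a2*(v^2-1) - 2*v*a1)/(v^2+1)).
  { apply (Rmult_eq_reg_r (v^2+1)); [|lra]. unfold Rdiv. rewrite Rmult_assoc, Rinv_l by lra.
    assert (t2*(v^2+1) - (a2*(v^2-1) - 2*v*a1) = (v*(a1-t1)+(a2+t2)) - v*(v*(a2-t2)-(a1+t1))) by ring.
    rewrite F1, F2 in H. lra. }
  rewrite Z1, Z2, T1, T2.
  set (q1 := (u^2-1)/(u^2+1) - (v^2-1)/(v^2+1)).
  set (q2 := 2*u/(u^2+1) - 2*v/(v^2+1)).
  assert (EQ : ((a1 * (u ^ 2 - 1) + 2 * u * a2) / (u ^ 2 + 1) - (a1 * (v ^ 2 - 1) + 2 * v * a2) / (v ^ 2 + 1)) ^ 2 +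
    ((a2 * (u ^ 2 - 1) - 2 * u * a1) / (u ^ 2 + 1) - (a2 * (v ^ 2 - 1) - 2 * v * a1) / (v ^ 2 + 1)) ^ 2
    = (a1^2 + a2^2) * (q1^2 + q2^2)).
  { unfold q1, q2. field. lra. }
  rewrite EQ, Ca, Rmult_1_l.
  assert (EQ2 : q1^2 + q2^2 = 4 * (u - v)^2 / ((u^2+1)*(v^2+1))).
  { unfold q1, q2. field. lra. }
  rewrite EQ2. unfold Rdiv.
  assert (1 <= (u^2+1)*(v^2+1)) by (pose proof (pow2_ge_0 u); pose proof (pow2_ge_0 v); nra).
  assert (0 < / ((u ^ 2 + 1) * (v ^ 2 + 1)) <= 1).
  { split. apply Rinv_0_lt_compat; lra. rewrite <- Rinv_1. apply Rinv_le_contravar; lra. }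
  pose proof (pow2_ge_0 (u - v)). nra.
Qed.

Lemma large_v (a w : Cx) (Rr : R) : unit_circle a -> unit_circle w -> a <> w -> 0 <= Rr ->
  Cdist a w < / (Rr + 1) -> Rr < Rabs (G a w).
Proof.
  intros Ca Cw H HR Hd.
  pose proof (nrm2_neq _ _ H) as Hn. pose proof (nrm2_nonneg a w).
  assert (Hlt : nrm2 a w < (/(Rr+1))^2) by (apply Cdist_lt_inv; auto).
  assert (Hr1 : / (Rr+1) <= 1). { rewrite <- Rinv_1. apply Rinv_le_contravar; lra. }
  assert (Hr0 : 0 < / (Rr+1)) by (apply Rinv_0_lt_compat; lra).
  rewrite G_formula by auto.
  set (n := nrm2 a w) in *.
  set (q := snd a * fst w - fst a * snd w).
  assert (Q : 4 * q^2 = n * (4 - n)).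
  { unfold n, q, nrm2. unfold unit_circle, Re, Im in *.
    assert (LL : (fst a ^ 2 + snd a ^ 2) * (fst w ^ 2 + snd w ^ 2) - q^2 = (fst a * fst w + snd a * snd w)^2) by (unfold q; ring).
    rewrite Ca, Cw in LL. unfold q in LL.
    replace ((fst a - fst w) ^ 2 + (snd a - snd w) ^ 2) with ((fst a ^ 2 + snd a ^ 2) + (fst w ^ 2 + snd w ^ 2) - 2 * (fst a * fst w + snd a * snd w)) by ring.
    rewrite Ca, Cw. nra. }
  assert (Hn0 : 0 < n) by lra.
  assert (V2 : (2 * q / n)^2 = 4 / n - 1).
  { replace ((2*q/n)^2) with (4*q^2/n^2) by (field; lra). rewrite Q. field. lra. }
  set (x := / (Rr + 1)) in *.
  assert (x^2 <= 1) by (simpl; rewrite Rmult_1_r; replace 1 with (1*1) by ring; apply Rmult_le_compat; lra).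
  assert (X2 : x^2 * (Rr+1)^2 = 1) by (unfold x; field; lra).
  assert (P1 : 0 < (Rr+1)^2) by (apply pow_lt; lra).
  assert (Hn1 : n * (Rr+1)^2 < 1) by (assert (n*(Rr+1)^2 < x^2*(Rr+1)^2) by (apply Rmult_lt_compat_r; auto); lra).
  assert (Hin : (Rr+1)^2 < 1 / n).
  { apply (Rmult_lt_reg_r n); auto. unfold Rdiv; rewrite Rmult_assoc, Rinv_l, Rmult_1_r by lra. lra. }
  assert (Hv : Rr^2 < (2 * q / n)^2).
  { rewrite V2. unfold Rdiv in *. rewrite Rmult_1_l in Hin.
    assert (Rr^2 < 4 * (Rr+1)^2 - 1) by (simpl; nra). lra. }
  rewrite <- (pow2_abs (2*q/n)) in Hv.
  destruct (Rlt_le_dec Rr (Rabs (2 * q / n))) as [ok|nok]; auto. exfalso.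
  pose proof (Rabs_pos (2*q/n)).
  assert (Rabs (2 * q / n) ^ 2 <= Rr ^ 2) by (apply pow_incr; lra). lra.
Qed.


Fixpoint P (n k : nat) (y : R) : R :=
  match n with
  | O => match k with O => 1 | S _ => 0 end
  | S m => match k with O => (1 - y) * P m O y | S j => y * P m j y + (1 - y) * P m (S j) y end
  end.

Lemma P_nonneg n k y : 0 <= y <= 1 -> 0 <= P n k y.
Proof.
  intros Hy. revert k. induction n; intros k; destruct k; simpl; try lra.
  - pose proof (IHn O). nra.
  - pose proof (IHn k). pose proof (IHn (S k)). nra.
Qed.

Lemma P_zero n k y : (n < k)%nat -> P n k y = 0.
Proof.
  revert k. induction n; intros k Hk; destruct k; simpl; try lia; auto.
  rewrite !IHn by lia. ring.
Qed.

Lemma sum_shift f N : sum_f_R0 f (S N) = f O + sum_f_R0 (fun k => f (S k)) N.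
Proof.
  induction N; simpl. reflexivity. simpl in IHN. rewrite IHN. ring.
Qed.

Lemma sum_lin2 f g al be N : sum_f_R0 (fun k => al * f k + be * g k) N = al * sum_f_R0 f N + be * sum_f_R0 g N.
Proof. induction N; simpl. ring. rewrite IHN. ring. Qed.

Lemma P_moment n al be c y :
  sum_f_R0 (fun k => (al + be * (INR k - c)^2) * P n k y) n
  = al + be * (INR n * y * (1 - y) + (INR n * y - c)^2).
Proof.
  revert c. induction n; intros c.
  - simpl. ring.
  - rewrite sum_shift. cbn [P].
    set (g := fun k => al + be * (INR k - c)^2).
    transitivity ((1 - y) * sum_f_R0 (fun k => g k * P n k y) (S n)
                  + y * sum_f_R0 (fun k => (al + be * (INR k - (c - 1))^2) * P n k y) n).
    + rewrite sum_shift. 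
      rewrite (sum_eq (fun k => (al + be * (INR (S k) - c) ^ 2) * (y * P n k y + (1 - y) * P n (S k) y))
                      (fun k => y * ((al + be * (INR k - (c - 1))^2) * P n k y) + (1 - y) * (g (S k) * P n (S k) y))).
      * rewrite sum_lin2. unfold g. ring.
      * intros i _. unfold g. rewrite S_INR. ring.
    + rewrite IHn. simpl sum_f_R0 at 1. rewrite P_zero by lia. unfold g at 2.
      replace (sum_f_R0 (fun k : nat => g k * P n k y) n) with
        (sum_f_R0 (fun k => (al + be * (INR k - c)^2) * P n k y) n) by reflexivity.
      rewrite IHn. rewrite S_INR. ring.
Qed.


Fixpoint Rsum (n : nat) (c : nat -> R) (w : nat -> Cx) (z : Cx) : R :=
  match n with O => 0 | S m => Rsum m c w z + c n * G (w n) z end.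

Lemma Rsum_ext n c c' w w' z : (forall k, (1 <= k <= n)%nat -> c k = c' k /\ w k = w' k) ->
  Rsum n c w z = Rsum n c' w' z.
Proof.
  induction n; simpl; intros H; auto.
  destruct (H (S n)) as [-> ->]; [lia|]. rewrite IHn; auto. intros k Hk; apply H; lia.
Qed.

Lemma Rsum_scal n c w z l : Rsum n (fun k => l * c k) w z = l * Rsum n c w z.
Proof. induction n; simpl. ring. rewrite IHn. ring. Qed.

Definition cat_c (n1 : nat) (c1 c2 : nat -> R) : nat -> R :=
  fun k => if (k <=? n1)%nat then c1 k else c2 (k - n1)%nat.
Definition cat_w (n1 : nat) (c1 c2 : nat -> Cx) : nat -> Cx :=
  fun k => if (k <=? n1)%nat then c1 k else c2 (k - n1)%nat.

Lemma Rsum_cat n1 m c1 c2 w1 w2 z :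
  Rsum (n1 + m) (cat_c n1 c1 c2) (cat_w n1 w1 w2) z = Rsum n1 c1 w1 z + Rsum m c2 w2 z.
Proof.
  induction m.
  - rewrite Nat.add_0_r. simpl. rewrite Rplus_0_r. apply Rsum_ext.
    intros k Hk. unfold cat_c, cat_w. replace (k <=? n1)%nat with true; auto.
    symmetry; apply Nat.leb_le; lia.
  - rewrite Nat.add_succ_r. simpl. rewrite IHm. unfold cat_c, cat_w.
    replace (S (n1 + m) <=? n1)%nat with false by (symmetry; apply Nat.leb_gt; lia).
    replace (S (n1 + m) - n1)%nat with (S m) by lia. ring.
Qed.

Lemma Rabs_sub_le a b : Rabs (a - b) <= Rabs a + Rabs b.
Proof. unfold Rminus. pose proof (Rabs_triang a (-b)). rewrite Rabs_Ropp in H. exact H. Qed.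

Lemma tail_bound X D B eps : 0 < eps -> 0 < D -> Rabs X * D <= B -> B < eps * D -> Rabs X < eps.
Proof. intros. pose proof (Rabs_pos X). nra. Qed.

Section Approx.
Variables (E K1 : Cx -> Prop) (a : Cx) (M : R).
Hypothesis hE : forall z, E z -> unit_circle z.
Hypothesis hK1 : forall z, K1 z -> unit_circle z.
Hypothesis ha : unit_circle a.
Hypothesis haK : forall z, K1 z -> a <> z.
Hypothesis hEK : forall w z, E w -> K1 z -> w <> z.
Hypothesis hacc : forall rho, 0 < rho -> exists w, E w /\ w <> a /\ Cdist a w < rho.
Hypothesis hM : 1 <= M.
Hypothesis hMb : forall z, K1 z -> Rabs (G a z) <= M.

Definition A (h : Cx -> R) : Prop := forall eps, 0 < eps ->
  exists n c0 c w, (forall k, (1 <= k <= n)%nat -> E (w k)) /\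
    forall z, K1 z -> Rabs (c0 + Rsum n c w z - h z) < eps.

Lemma A_ext h g : (forall z, K1 z -> h z = g z) -> A h -> A g.
Proof.
  intros H Ah eps Heps. destruct (Ah eps Heps) as [n [c0 [c [w [Hw Hz]]]]].
  exists n, c0, c, w. split; auto. intros z Kz. rewrite <- H; auto.
Qed.

Lemma A_lim g : (forall eps, 0 < eps -> exists h, A h /\ forall z, K1 z -> Rabs (h z - g z) < eps) -> A g.
Proof.
  intros H eps Heps. destruct (H (eps/2)) as [h [Ah Hh]]; [lra|].
  destruct (Ah (eps/2)) as [n [c0 [c [w [Hw Hz]]]]]; [lra|].
  exists n, c0, c, w. split; auto. intros z Kz.
  pose proof (Hz z Kz). pose proof (Hh z Kz).
  replace (c0 + Rsum n c w z - g z) with ((c0 + Rsum n c w z - h z) + (h z - g z)) by ring.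
  pose proof (Rabs_triang (c0 + Rsum n c w z - h z) (h z - g z)). lra.
Qed.

Lemma A_const c0 : A (fun _ => c0).
Proof.
  intros eps Heps. exists O, c0, (fun _ => 0), (fun _ => a). split. intros; lia.
  intros z _. simpl. replace (c0 + 0 - c0) with 0 by ring. rewrite Rabs_R0. auto.
Qed.

Lemma A_G w : E w -> A (G w).
Proof.
  intros Ew eps Heps. exists 1%nat, 0, (fun _ => 1), (fun _ => w). split.
  intros; auto. intros z _. simpl. replace (0 + (0 + 1 * G w z) - G w z) with 0 by ring.
  rewrite Rabs_R0. auto.
Qed.

Lemma A_add h1 h2 : A h1 -> A h2 -> A (fun z => h1 z + h2 z).
Proof.
  intros A1 A2 eps Heps.
  destruct (A1 (eps/2)) as [n1 [c01 [c1 [w1 [Hw1 Hz1]]]]]; [lra|].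
  destruct (A2 (eps/2)) as [n2 [c02 [c2 [w2 [Hw2 Hz2]]]]]; [lra|].
  exists (n1 + n2)%nat, (c01 + c02), (cat_c n1 c1 c2), (cat_w n1 w1 w2). split.
  - intros k Hk. unfold cat_w. destruct (k <=? n1)%nat eqn:e.
    + apply Nat.leb_le in e. apply Hw1. lia.
    + apply Nat.leb_gt in e. apply Hw2. lia.
  - intros z Kz. rewrite Rsum_cat. pose proof (Hz1 z Kz). pose proof (Hz2 z Kz).
    replace (c01 + c02 + (Rsum n1 c1 w1 z + Rsum n2 c2 w2 z) - (h1 z + h2 z))
      with ((c01 + Rsum n1 c1 w1 z - h1 z) + (c02 + Rsum n2 c2 w2 z - h2 z)) by ring.
    pose proof (Rabs_triang (c01 + Rsum n1 c1 w1 z - h1 z) (c02 + Rsum n2 c2 w2 z - h2 z)). lra.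
Qed.

Lemma A_scal l h : A h -> A (fun z => l * h z).
Proof.
  intros Ah eps Heps.
  assert (Hl : 0 < Rabs l + 1) by (pose proof (Rabs_pos l); lra).
  destruct (Ah (eps / (Rabs l + 1))) as [n [c0 [c [w [Hw Hz]]]]].
  { apply Rdiv_lt_0_compat; auto. }
  exists n, (l * c0), (fun k => l * c k), w. split; auto. intros z Kz.
  rewrite Rsum_scal. replace (l * c0 + l * Rsum n c w z - l * h z) with (l * (c0 + Rsum n c w z - h z)) by ring.
  rewrite Rabs_mult. pose proof (Hz z Kz). pose proof (Rabs_pos l). pose proof (Rabs_pos (c0 + Rsum n c w z - h z)).
  assert (Rabs (c0 + Rsum n c w z - h z) * (Rabs l + 1) < eps).
  { apply (Rmult_lt_compat_r (Rabs l + 1)) in H; auto. unfold Rdiv in H. rewrite Rmult_assoc, Rinv_l in H; lra. }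
  nra.
Qed.

Lemma A_lin al be h1 h2 : A h1 -> A h2 -> A (fun z => al * h1 z + be * h2 z).
Proof. intros. apply A_add; apply A_scal; auto. Qed.

Lemma A_sum N (F : nat -> Cx -> R) : (forall k, (k <= N)%nat -> A (F k)) ->
  A (fun z => sum_f_R0 (fun k => F k z) N).
Proof.
  induction N; intros H; simpl.
  - apply H; lia.
  - apply A_add. apply IHN; intros; apply H; lia. apply H; lia.
Qed.


Lemma choose_w eps : 0 < eps -> exists w, E w /\ w <> a /\ M + M^3/eps < Rabs (G a w).
Proof.
  intros Heps. set (Rr := M + M^3/eps).
  assert (HR : 0 <= Rr). { unfold Rr. assert (0 <= M^3/eps) by (apply Rlt_le, Rdiv_lt_0_compat; [apply pow_lt|]; lra). lra. }
  destruct (hacc (/ (Rr + 1))) as [w [Ew [Hwa Hd]]]. { apply Rinv_0_lt_compat; lra. }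
  exists w. split; auto. split; auto. apply large_v; auto.
Qed.

Lemma key_K w z : E w -> K1 z -> w <> a -> G w z * (G a w - G a z) = G a z * G a w + 1.
Proof. intros Ew Kz Hwa. apply key_R; auto. Qed.


Lemma H_id v uz g : g * (v - uz) = uz * v + 1 ->
  (- v / (1 + v ^ 2) + v ^ 2 / (1 + v ^ 2) * g - uz) * (v - uz) = uz^2.
Proof.
  intros K. assert (Pv : 0 < 1 + v^2) by (pose proof (pow2_ge_0 v); lra).
  replace ((- v / (1 + v ^ 2) + v ^ 2 / (1 + v ^ 2) * g - uz) * (v - uz))
    with ((- v - uz * (1 + v^2)) * (v - uz) / (1 + v^2) + v^2 / (1 + v^2) * (g * (v - uz))) by (field; lra).
  rewrite K. field. lra.
Qed.

Lemma A_u : A (G a).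
Proof.
  apply A_lim. intros eps Heps.
  destruct (choose_w eps Heps) as [w [Ew [Hwa Hv]]].
  set (v := G a w) in *.
  exists (fun z => - v / (1 + v^2) + v^2 / (1 + v^2) * G w z). split.
  { eapply A_ext; [| apply (A_lin (-v/(1+v^2)) (v^2/(1+v^2)) (fun _ => 1) (G w)); [apply A_const | apply A_G; auto]].
    intros; cbv beta; ring. }
  intros z Kz. pose proof (key_K w z Ew Kz Hwa) as K. fold v in K.
  set (uz := G a z) in *. set (g := G w z) in *. pose proof (hMb z Kz) as Hu. fold uz in Hu.
  assert (Pv : 0 < 1 + v^2) by (pose proof (pow2_ge_0 v); lra).
  assert (HM3 : M^2 <= M^3) by (simpl; nra).
  assert (HD : M^3/eps < Rabs (v - uz)).
  { pose proof (Rabs_triang_inv v uz). lra. }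
  assert (0 < M^3/eps) by (apply Rdiv_lt_0_compat; [apply pow_lt|]; lra).
  apply (tail_bound _ (Rabs (v - uz)) (M^2)); auto. lra.
  - rewrite <- Rabs_mult.
    replace ((- v / (1 + v ^ 2) + v ^ 2 / (1 + v ^ 2) * g - uz) * (v - uz)) with (uz^2).
    + rewrite Rabs_right by (apply Rle_ge, pow2_ge_0). rewrite <- pow2_abs. apply pow_incr. split; [apply Rabs_pos | exact Hu].
    + apply (Rmult_eq_reg_r (1 + v^2)); [|lra].
      field_simplify; [|lra]. 
      replace (uz ^ 2 * v ^ 2 + uz ^ 2 - uz * v ^ 3 - uz * v ^ 2 * g + v ^ 3 * g - v ^ 2) with (uz^2*v^2 + uz^2 + v^2 * (g*(v-uz) - (uz*v+1))) by ring. rewrite K. ring.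
  - assert (eps * (M^3/eps) = M^3) by (field; lra). nra.
Qed.


Lemma A_H w : E w -> A (fun z => - G a w / (1 + G a w ^ 2) + G a w ^ 2 / (1 + G a w ^ 2) * G w z).
Proof.
  intros Ew. eapply A_ext; [| apply (A_lin (- G a w / (1 + G a w ^ 2)) (G a w ^ 2 / (1 + G a w ^ 2)) (fun _ => 1) (G w)); [apply A_const | apply A_G; auto]].
  intros; cbv beta; ring.
Qed.

Lemma A_u2 : A (fun z => G a z ^ 2).
Proof.
  apply A_lim. intros eps Heps.
  destruct (choose_w eps Heps) as [w [Ew [Hwa Hv]]].
  set (v := G a w) in *.
  exists (fun z => v * (- v / (1 + v ^ 2) + v ^ 2 / (1 + v ^ 2) * G w z) + (-v) * G a z). split.
  { apply A_lin. apply A_H; auto. apply A_u. }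
  intros z Kz. pose proof (key_K w z Ew Kz Hwa) as K. fold v in K.
  set (uz := G a z) in *. set (g := G w z) in *. pose proof (hMb z Kz) as Hu. fold uz in Hu.
  pose proof (H_id v uz g K) as HI.
  assert (HD : M^3/eps < Rabs (v - uz)).
  { pose proof (Rabs_triang_inv v uz). lra. }
  assert (0 < M^3/eps) by (apply Rdiv_lt_0_compat; [apply pow_lt|]; lra).
  apply (tail_bound _ (Rabs (v - uz)) (M^3)); auto. lra.
  - rewrite <- Rabs_mult.
    replace ((v * (- v / (1 + v ^ 2) + v ^ 2 / (1 + v ^ 2) * g) + - v * uz - uz ^ 2) * (v - uz))
      with (v * ((- v / (1 + v ^ 2) + v ^ 2 / (1 + v ^ 2) * g - uz) * (v - uz)) - uz^2 * (v - uz)) by ring.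
    rewrite HI. replace (v * uz ^ 2 - uz ^ 2 * (v - uz)) with (uz^3) by ring.
    rewrite <- RPow_abs. apply pow_incr. split; [apply Rabs_pos | exact Hu].
  - assert (eps * (M^3/eps) = M^3) by (field; lra). nra.
Qed.

Lemma A_uG w : E w -> A (fun z => G a z * G w z).
Proof.
  intros Ew. destruct (classic (w = a)) as [e|Hwa].
  - subst w. eapply A_ext; [|apply A_u2]. intros; cbv beta; ring.
  - set (v := G a w).
    eapply A_ext; [| apply (A_add (fun z => v * G w z + (-v) * G a z) (fun _ => -1)); [apply A_lin; [apply A_G; auto | apply A_u] | apply A_const]].
    intros z Kz; cbv beta. pose proof (key_K w z Ew Kz Hwa) as K. fold v in K. lra.
Qed.

Lemma A_uRsum n c0 c w : (forall k, (1 <= k <= n)%nat -> E (w k)) ->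
  A (fun z => G a z * (c0 + Rsum n c w z)).
Proof.
  induction n; intros Hw.
  - eapply A_ext; [| apply (A_scal c0 (G a)); apply A_u]. intros; simpl; ring.
  - eapply A_ext; [| apply (A_lin 1 (c (S n)) (fun z => G a z * (c0 + Rsum n c w z)) (fun z => G a z * G (w (S n)) z)); [apply IHn | apply A_uG]].
    + intros; simpl; ring.
    + intros k Hk; apply Hw; lia.
    + apply Hw; lia.
Qed.

Lemma A_mulu h : A h -> A (fun z => G a z * h z).
Proof.
  intros Ah. apply A_lim. intros eps Heps.
  destruct (Ah (eps / M)) as [n [c0 [c [w [Hw Hz]]]]]. { apply Rdiv_lt_0_compat; lra. }
  exists (fun z => G a z * (c0 + Rsum n c w z)). split. apply A_uRsum; auto.
  intros z Kz. rewrite <- Rmult_minus_distr_l, Rabs_mult.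
  pose proof (Hz z Kz) as H1. pose proof (hMb z Kz) as H2.
  pose proof (Rabs_pos (c0 + Rsum n c w z - h z)).
  assert (Rabs (c0 + Rsum n c w z - h z) * M < eps).
  { apply (Rmult_lt_compat_r M) in H1; [|lra]. unfold Rdiv in H1. rewrite Rmult_assoc, Rinv_l in H1; lra. }
  pose proof (Rabs_pos (G a z)). nra.
Qed.


Lemma A_y h : A h -> A (fun z => (G a z + M) / (2 * M) * h z).
Proof.
  intros Ah. eapply A_ext; [| apply (A_lin (/(2*M)) (/2) (fun z => G a z * h z) h); [apply A_mulu; auto | auto]].
  intros; cbv beta. field. lra.
Qed.

Lemma A_P n k : A (fun z => P n k ((G a z + M) / (2 * M))).
Proof.
  revert k. induction n; intros k.
  - destruct k; simpl; apply A_const.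
  - destruct k; simpl.
    + eapply A_ext; [| apply (A_lin 1 (-1) _ _ (IHn O) (A_y _ (IHn O)))]. intros; cbv beta; ring.
    + eapply A_ext; [| apply (A_add _ _ (A_y _ (IHn k)) (A_lin 1 (-1) _ _ (IHn (S k)) (A_y _ (IHn (S k)))))].
      intros; cbv beta; ring.
Qed.

Lemma A_cont f : compactC K1 -> continuous_onC K1 f -> A f.
Proof.
  intros HK Hf. apply A_lim. intros eps Heps.
  destruct (classic (exists z0, K1 z0)) as [[z0 Kz0]|Hne].
  2:{ exists (fun _ => 0). split. apply A_const. intros z Kz. exfalso; eauto. }
  destruct (bounded_cont K1 f HK Hf) as [Mf [HMf Hbf]].
  destruct (unif_cont K1 f HK Hf (eps/2)) as [d1 [Hd1 Hu]]; [lra|].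
  set (y := fun z => (G a z + M) / (2 * M)).
  assert (Hy01 : forall z, K1 z -> 0 <= y z <= 1).
  { intros z Kz. pose proof (hMb z Kz) as Hb. assert (Hb2 : - M <= G a z <= M) by (split; [pose proof (Rabs_Ropp (G a z)); pose proof (Rle_abs (- G a z)) | pose proof (Rle_abs (G a z))]; lra). unfold y.
    split. apply Rmult_le_pos; [lra|]. left; apply Rinv_0_lt_compat; lra.
    apply (Rmult_le_reg_r (2*M)); [lra|]. unfold Rdiv. rewrite Rmult_assoc, Rinv_l; lra. }
  assert (Hlip : forall z t, K1 z -> K1 t -> Cdist z t <= 4 * M * Rabs (y z - y t)).
  { intros z t Kz Kt. apply Cdist_le_sq. pose proof (Rabs_pos (y z - y t)). nra.
    pose proof (inv_lip a z t ha (hK1 z Kz) (hK1 t Kt) (haK z Kz) (haK t Kt)) as L.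
    replace (G a z - G a t) with (2 * M * (y z - y t)) in L by (unfold y; field; lra).
    replace ((4 * M * Rabs (y z - y t)) ^ 2) with (4 * (2 * M)^2 * (Rabs (y z - y t))^2) by ring.
    rewrite pow2_abs. replace ((2 * M * (y z - y t)) ^ 2) with ((2 * M)^2 * (y z - y t)^2) in L by ring. rewrite Rmult_assoc. exact L. }
  set (delta := d1 / (8 * M)).
  assert (Hdelta : 0 < delta) by (apply Rdiv_lt_0_compat; lra).
  destruct (INR_archimed 1 (Mf / (delta^2 * eps))) as [n0 Hn0]; [lra|].
  set (n := S n0).
  assert (Hn : INR n > Mf / (delta^2 * eps)). { unfold n. rewrite S_INR. lra. }
  assert (Hnpos : 0 < INR n) by (apply lt_0_INR; unfold n; lia).
  assert (Hp : forall k, exists p, K1 p /\ ((exists q, K1 q /\ Rabs (y q - INR k / INR n) < delta) -> Rabs (y p - INR k / INR n) < delta)).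
  { intros k. destruct (classic (exists q, K1 q /\ Rabs (y q - INR k / INR n) < delta)) as [[q [Kq Hq]]|Hq].
    - exists q. auto.
    - exists z0. split; auto. intros H; contradiction. }
  set (pk := fun k => proj1_sig (constructive_indefinite_description _ (Hp k))).
  assert (Hpk : forall k, K1 (pk k) /\ ((exists q, K1 q /\ Rabs (y q - INR k / INR n) < delta) -> Rabs (y (pk k) - INR k / INR n) < delta)).
  { intros k. unfold pk. destruct (constructive_indefinite_description _ (Hp k)) as [p Hpp]. exact Hpp. }
  exists (fun z => sum_f_R0 (fun k => f (pk k) * P n k (y z)) n). split.
  { apply (A_sum n (fun k z => f (pk k) * P n k (y z))). intros k _. apply A_scal. apply A_P. }
  intros z Kz.
  set (be := 2 * Mf / (delta^2 * INR n ^ 2)).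
  assert (Hbe : 0 < be). { unfold be. apply Rdiv_lt_0_compat. lra. apply Rmult_lt_0_compat; apply pow_lt; lra. }
  assert (Hterm : forall k, Rabs (f (pk k) - f z) <= eps/2 + be * (INR k - INR n * y z)^2).
  { intros k. destruct (Hpk k) as [Kp Hpp].
    destruct (Rlt_le_dec (Rabs (y z - INR k / INR n)) delta) as [Hc|Hc].
    - assert (H1 : Rabs (y (pk k) - INR k / INR n) < delta) by (apply Hpp; eauto).
      assert (H2 : Rabs (y z - y (pk k)) < 2 * delta).
      { replace (y z - y (pk k)) with ((y z - INR k / INR n) - (y (pk k) - INR k / INR n)) by ring.
        pose proof (Rabs_sub_le (y z - INR k / INR n) (y (pk k) - INR k / INR n)). lra. }
      assert (H3 : Cdist z (pk k) < d1).
      { pose proof (Hlip z (pk k) Kz Kp). unfold delta in H2.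
        assert (4 * M * Rabs (y z - y (pk k)) < d1).
        { apply (Rmult_lt_compat_l (4*M)) in H2; [|lra]. replace (4 * M * (2 * (d1 / (8 * M)))) with d1 in H2 by (field; lra). exact H2. }
        lra. }
      pose proof (Hu z (pk k) Kz Kp H3). rewrite Rabs_minus_sym in H.
      pose proof (pow2_ge_0 (INR k - INR n * y z)). nra.
    - assert (H1 : delta^2 <= (y z - INR k / INR n)^2).
      { rewrite <- (pow2_abs (y z - INR k / INR n)). apply pow_incr. lra. }
      assert (H2 : (INR k - INR n * y z)^2 = INR n ^ 2 * (y z - INR k / INR n)^2) by (field; lra).
      assert (H3 : be * (INR k - INR n * y z)^2 >= 2 * Mf).
      { rewrite H2. unfold be.
        replace (2 * Mf / (delta ^ 2 * INR n ^ 2) * (INR n ^ 2 * (y z - INR k / INR n) ^ 2))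
          with (2 * Mf * ((y z - INR k / INR n) ^ 2 / delta^2)) by (field; lra).
        assert (1 <= (y z - INR k / INR n) ^ 2 / delta ^ 2).
        { apply (Rmult_le_reg_r (delta^2)); [apply pow_lt; lra|]. unfold Rdiv. rewrite Rmult_assoc, Rinv_l. lra.
          apply pow_nonzero. lra. }
        nra. }
      pose proof (Hbf _ Kp). pose proof (Hbf _ Kz).
      pose proof (Rabs_sub_le (f (pk k)) (f z)). lra. }
  assert (Hsum1 : sum_f_R0 (fun k => P n k (y z)) n = 1).
  { rewrite (sum_eq _ (fun k => (1 + 0 * (INR k - 0)^2) * P n k (y z))) by (intros; ring).
    rewrite P_moment. ring. }
  assert (Hdiff : sum_f_R0 (fun k => f (pk k) * P n k (y z)) n - f z
                  = sum_f_R0 (fun k => (f (pk k) - f z) * P n k (y z)) n).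
  { rewrite (sum_eq (fun k => (f (pk k) - f z) * P n k (y z)) (fun k => 1 * (f (pk k) * P n k (y z)) + (- f z) * P n k (y z))) by (intros; ring).
    rewrite sum_lin2, Hsum1. ring. }
  rewrite Hdiff.
  eapply Rle_lt_trans. apply sum_f_R0_triangle.
  eapply Rle_lt_trans.
  { apply (sum_Rle _ (fun k => (eps/2 + be * (INR k - INR n * y z)^2) * P n k (y z))).
    intros k _. rewrite Rabs_mult. rewrite (Rabs_right (P n k (y z))) by (apply Rle_ge, P_nonneg; auto).
    apply Rmult_le_compat_r. apply P_nonneg; auto. apply Hterm. }
  rewrite P_moment. replace ((INR n * y z - INR n * y z)^2) with 0 by ring.
  destruct (Hy01 z Kz) as [Hy0 Hy1].
  assert (y z * (1 - y z) <= 1/4) by (pose proof (pow2_ge_0 (y z - 1/2)); nra).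
  assert (be * (INR n * y z * (1 - y z) + 0) <= be * INR n / 4).
  { replace (INR n * y z * (1 - y z) + 0) with (INR n * (y z * (1 - y z))) by ring.
    assert (0 <= INR n * (y z * (1 - y z)) <= INR n / 4) by (split; [apply Rmult_le_pos; nra | nra]). nra. }
  assert (be * INR n / 4 < eps / 2).
  { unfold be. replace (2 * Mf / (delta ^ 2 * INR n ^ 2) * INR n / 4) with (Mf / (2 * delta^2 * INR n)) by (field; lra).
    apply (Rmult_lt_reg_r (2 * delta^2 * INR n)). apply Rmult_lt_0_compat; [|lra]. apply Rmult_lt_0_compat; [lra|apply pow_lt; lra].
    unfold Rdiv at 1. rewrite Rmult_assoc, Rinv_l, Rmult_1_r. 2:{ apply Rgt_not_eq, Rmult_lt_0_compat; [|lra]. apply Rmult_lt_0_compat; [lra|apply pow_lt; lra]. }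
    assert (Mf < INR n * (delta^2 * eps)).
    { apply (Rmult_gt_compat_r (delta^2*eps)) in Hn. unfold Rdiv in Hn. rewrite Rmult_assoc, Rinv_l, Rmult_1_r in Hn. lra.
      apply Rgt_not_eq, Rmult_lt_0_compat; [apply pow_lt|]; lra. apply Rmult_lt_0_compat; [apply pow_lt|]; lra. }
    lra. }
  lra.
Qed.

End Approx.


Lemma herg_im n c w z : Im (herg_sum n c w z) = - Rsum n c w z.
Proof.
  induction n; cbn [herg_sum Rsum]. unfold Im; simpl; ring.
  unfold G. replace (Rsum n c w z) with (- Im (herg_sum n c w z)) by (rewrite IHn; ring).
  destruct (Cdiv (Cplus (w (S n)) z) (Cminus (w (S n)) z)) as [d1 d2].
  destruct (herg_sum n c w z) as [h1 h2].
  unfold Cplus, Cmult, Ci, RtoC, Re, Im; simpl. ring.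
Qed.

Lemma herg_re (E K1 : Cx -> Prop) n c w z :
  (forall z, E z -> unit_circle z) -> (forall z, K1 z -> unit_circle z) ->
  (forall w z, E w -> K1 z -> w <> z) ->
  (forall k, (1 <= k <= n)%nat -> E (w k)) -> K1 z -> Re (herg_sum n c w z) = 0.
Proof.
  intros hE hK hEK Hw Kz. induction n; cbn [herg_sum]. reflexivity.
  assert (Ew : E (w (S n))) by (apply Hw; lia).
  pose proof (ImG (w (S n)) z (nrm2_neq _ _ (hEK _ _ Ew Kz)) (hE _ Ew) (hK _ Kz)) as I.
  assert (IH : Re (herg_sum n c w z) = 0) by (apply IHn; intros; apply Hw; lia).
  revert I IH. destruct (Cdiv (Cplus (w (S n)) z) (Cminus (w (S n)) z)) as [d1 d2].
  destruct (herg_sum n c w z) as [h1 h2].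
  unfold Cplus, Cmult, Ci, RtoC, Re, Im; simpl. intros I IH. rewrite IH. replace d1 with 0 by lra. ring.
Qed.

Lemma rfun_parts n c0 c w z :
  Re (rfun n c0 c w z) = c0 + Rsum n c w z /\ Im (rfun n c0 c w z) = Re (herg_sum n c w z).
Proof.
  unfold rfun. replace (Rsum n c w z) with (- Im (herg_sum n c w z)) by (rewrite herg_im; ring).
  destruct (herg_sum n c w z) as [h1 h2].
  unfold Cplus, Cmult, Ci, RtoC, Re, Im; simpl. split; ring.
Qed.

Theorem mainTheorem5 (E K1 : Cx -> Prop)
  (hE : forall z, E z -> unit_circle z)
  (hEinf : infinite_set E)
  (hK1 : forall z, K1 z -> unit_circle z)
  (hK1c : compactC K1)
  (hdisj : forall z, closureC E z -> K1 z -> False) :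
  (forall (n : nat) (c0 : R) (c : nat -> R) (w : nat -> Cx),
     (forall k, (1 <= k <= n)%nat -> E (w k)) ->
     forall z, K1 z -> Im (rfun n c0 c w z) = 0)
  /\
  (forall f : Cx -> R, continuous_onC K1 f ->
   forall eps, 0 < eps ->
   exists (n : nat) (c0 : R) (c : nat -> R) (w : nat -> Cx),
     (forall k, (1 <= k <= n)%nat -> E (w k)) /\
     forall z, K1 z -> Cmod (Cminus (rfun n c0 c w z) (RtoC (f z))) < eps).
Proof.
  assert (hEK : forall w z, E w -> K1 z -> w <> z).
  { intros w z Ew Kz e. subst. apply (hdisj z); auto. intros eps Heps. exists z. rewrite Cdist_refl. auto. }
  assert (Part1 : forall (n : nat) (c0 : R) (c : nat -> R) (w : nat -> Cx),
     (forall k, (1 <= k <= n)%nat -> E (w k)) ->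
     forall z, K1 z -> Im (rfun n c0 c w z) = 0).
  { intros n c0 c w Hw z Kz. rewrite (proj2 (rfun_parts n c0 c w z)).
    apply (herg_re E K1); auto. }
  split; auto.
  intros f Hf eps Heps.
  destruct (exists_acc E hE hEinf) as [a [Ca hacc]].
  assert (haK : forall z, K1 z -> a <> z).
  { intros z Kz e. subst. apply (hdisj z); auto. intros eps' Heps'.
    destruct (hacc eps' Heps') as [w [Ew [_ Hd]]]. eauto. }
  destruct (dist_pos_compact K1 a hK1c) as [d [Hd Hdz]].
  { intros z Kz e. apply (haK z Kz). auto. }
  set (M := Rmax 1 (2 / d^2)).
  assert (hM : 1 <= M) by apply Rmax_l.
  assert (hMb : forall z, K1 z -> Rabs (G a z) <= M).
  { intros z Kz. pose proof (G_bound a z Ca (hK1 z Kz) (haK z Kz)).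
    assert (d^2 <= nrm2 a z).
    { rewrite <- Cdist_sq. apply pow_incr. split; [lra | auto]. }
    assert (2 / nrm2 a z <= 2 / d^2).
    { apply Rmult_le_compat_l; [lra|]. apply Rinv_le_contravar; auto. apply pow_lt; lra. }
    pose proof (Rmax_r 1 (2 / d^2)). fold M in H2. lra. }
  pose proof (A_cont E K1 a M hE hK1 Ca haK hEK hacc hM hMb f hK1c Hf) as HA.
  destruct (HA eps Heps) as [n [c0 [c [w [Hw Hz]]]]].
  exists n, c0, c, w. split; auto.
  intros z Kz. pose proof (Part1 n c0 c w Hw z Kz) as HI.
  destruct (rfun_parts n c0 c w z) as [HR _].
  revert HI HR. destruct (rfun n c0 c w z) as [r1 r2].
  unfold Cmod, Cminus, RtoC, Re, Im; simpl. intros -> ->.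
  replace ((c0 + Rsum n c w z - f z) * ((c0 + Rsum n c w z - f z) * 1) + (0 - 0) * ((0 - 0) * 1))
    with (Rsqr (c0 + Rsum n c w z - f z)) by (unfold Rsqr; ring).
  rewrite sqrt_Rsqr_abs. apply Hz; auto.
Qed.
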